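(* Let $\tau$ be a continuous distributive triangle function on $\Delta^+$, $\Sigma$ a $\sigma$-ring of subsets of $\Omega\ne\emptyset$, $\gamma$ a $\tau$-decomposable measure on $\Sigma$ continuous from below, and $f:\Omega\to[0,+\infty]$ a measurable function that is $\gamma$-integrable on every $E\in\Sigma$. Then the set function $\nu^f:\Sigma\to\Delta^+$, $\nu^f_E:=\int_E f\,d\gamma$, is a $\tau$-decomposable measure.
   Context: $\Delta^+$: functions $F:[-\infty,+\infty]\to[0,1]$ non-decreasing, left-continuous on $\mathbb{R}$, $F(x)=0$ for $x\le0$, $F(+\infty)=1$, ordered pointwise; $\varepsilon_a(x)=1$ if $x>a$, else $0$. Triangle function: symmetric, associative $\tau:\Delta^+\times\Delta^+\to\Delta^+$, non-decreasing in each variable, identity $\varepsilon_0$; $G\oplus H=\tau(G,H)$, $\bigoplus_{k=1}^nG_k=\tau(G_1,\bigoplus_{k=2}^nG_k)$. $c\odot G=\varepsilon_0$ if $c=0$, $(c\odot G)(x)=G(x/c)$ if $c>0$; $\tau$ distributive if $c\odot(G\oplus H)=(c\odot G)\oplus(c\odot H)$ for all $c\ge0$. Convergence in $\Delta^+$ is weak convergence (at continuity points in $\mathbb{R}$ of the limit); $\tau$ continuous if continuous for it. $\tau$-decomposable measure on a ring $\Sigma$: $\gamma:\Sigma\to\Delta^+$, $\gamma_\emptyset=\varepsilon_0$, $\gamma_{E\cup F}=\tau(\gamma_E,\gamma_F)$ for disjoint $E,F$; continuous from below: $\gamma_{E_n}\to\gamma_E$ whenever $E_n\subseteq E_{n+1}$,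 $\bigcup E_n=E$ in $\Sigma$. Simple function $\sum_{i=1}^nx_i\chi_{E_i}$ ($x_i\in[0,\infty)$, $E_i\in\Sigma$ pairwise disjoint), $\int_Ef\,d\gamma=\bigoplus_{i}x_i\odot\gamma_{E\cap E_i}$. Measurable: pointwise limit of simple functions. $\mathcal S_{f,E}$: simple $\mathfrak f\le f$ on $E$. $f$ is $\gamma$-integrable on $E$ if some $H\in\Delta^+$ bounds $\int_E\mathfrak f\,d\gamma\ge H$ for all $\mathfrak f\in\mathcal S_{f,E}$; then $\int_Ef\,d\gamma=\inf\{\int_E\mathfrak f\,d\gamma:\mathfrak f\in\mathcal S_{f,E}\}$ in $(\Delta^+,\le)$. *)

(* Defs.v *)
From Coquelicot Require Import Coquelicot.
From Stdlib Require Import Reals ClassicalEpsilon ClassicalDescription List.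
Open Scope R_scope.

Definition DF := Rbar -> R.

Definition Delta (F : DF) : Prop :=
  (forall x, 0 <= F x <= 1) /\
  (forall x y, Rbar_le x y -> F x <= F y) /\
  (forall x : R, forall eps, 0 < eps -> exists delta, 0 < delta /\
      forall y : R, x - delta < y < x -> Rabs (F (Finite y) - F (Finite x)) < eps) /\
  (forall x, Rbar_le x (Finite 0) -> F x = 0) /\
  F p_infty = 1.

Definition dle (F G : DF) : Prop := forall x, F x <= G x.

Definition eps0 : DF := fun x => if Rbar_lt_dec (Finite 0) x then 1 else 0.

Definition weak_conv (Fn : nat -> DF) (F : DF) : Prop :=
  forall x : R, continuity_pt (fun r => F (Finite r)) x ->
    Un_cv (fun n => Fn n (Finite x)) (F (Finite x)).

Definition triangle_function (tau : DF -> DF -> DF) : Prop :=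
  (forall F G, Delta F -> Delta G -> Delta (tau F G)) /\
  (forall F G, Delta F -> Delta G -> tau F G = tau G F) /\
  (forall F G H, Delta F -> Delta G -> Delta H ->
      tau F (tau G H) = tau (tau F G) H) /\
  (forall F G H, Delta F -> Delta G -> Delta H -> dle F G ->
      dle (tau F H) (tau G H) /\ dle (tau H F) (tau H G)) /\
  (forall F, Delta F -> tau F eps0 = F).

Definition tau_continuous (tau : DF -> DF -> DF) : Prop :=
  forall (Fn Gn : nat -> DF) (F G : DF),
    (forall n, Delta (Fn n)) -> (forall n, Delta (Gn n)) -> Delta F -> Delta G ->
    weak_conv Fn F -> weak_conv Gn G ->
    weak_conv (fun n => tau (Fn n) (Gn n)) (tau F G).

Definition smul (c : R) (G : DF) : DF := fun x =>
  if Req_dec_T c 0 then eps0 x else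
  match x with
  | Finite r => G (Finite (r / c))
  | _ => G x
  end.

Definition distributive (tau : DF -> DF -> DF) : Prop :=
  forall c G H, 0 <= c -> Delta G -> Delta H ->
    smul c (tau G H) = tau (smul c G) (smul c H).

Definition sigma_ring {Omega : Type} (Sg : (Omega -> Prop) -> Prop) : Prop :=
  Sg (fun _ => False) /\
  (forall A B, Sg A -> Sg B -> Sg (fun w => A w /\ ~ B w)) /\
  (forall A : nat -> Omega -> Prop, (forall n, Sg (A n)) -> Sg (fun w => exists n, A n w)).

Definition decomposable {Omega : Type} (tau : DF -> DF -> DF)
    (Sg : (Omega -> Prop) -> Prop) (g : (Omega -> Prop) -> DF) : Prop :=
  (forall E, Sg E -> Delta (g E)) /\
  g (fun _ => False) = eps0 /\
  (forall E F, Sg E -> Sg F -> (forall w, ~ (E w /\ F w)) ->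
     g (fun w => E w \/ F w) = tau (g E) (g F)).

Definition cont_from_below {Omega : Type} (Sg : (Omega -> Prop) -> Prop)
    (g : (Omega -> Prop) -> DF) : Prop :=
  forall (En : nat -> Omega -> Prop) (E : Omega -> Prop),
    (forall n, Sg (En n)) -> Sg E ->
    (forall n w, En n w -> En (S n) w) ->
    (forall w, E w <-> exists n, En n w) ->
    weak_conv (fun n => g (En n)) (g E).

(* simple functions: lists of (x_i, E_i) with x_i >= 0, E_i in S pairwise disjoint *)
Definition is_simple {Omega : Type} (Sg : (Omega -> Prop) -> Prop)
    (s : list (R * (Omega -> Prop))) : Prop :=
  Forall (fun p => 0 <= fst p /\ Sg (snd p)) s /\
  ForallOrdPairs (fun p q => forall w, ~ (snd p w /\ snd q w)) s.

Definition ind {Omega : Type} (A : Omega -> Prop) (w : Omega) : R :=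
  if excluded_middle_informative (A w) then 1 else 0.

Definition seval {Omega : Type} (s : list (R * (Omega -> Prop))) (w : Omega) : R :=
  fold_right (fun p acc => fst p * ind (snd p) w + acc) 0 s.

(* int_E (sum x_i chi_{E_i}) dg = (+)_i x_i (.) g_{E cap E_i} *)
Definition sint {Omega : Type} (tau : DF -> DF -> DF) (g : (Omega -> Prop) -> DF)
    (E : Omega -> Prop) (s : list (R * (Omega -> Prop))) : DF :=
  fold_right (fun p acc => tau (smul (fst p) (g (fun w => E w /\ snd p w))) acc) eps0 s.

Definition measurable_fun {Omega : Type} (Sg : (Omega -> Prop) -> Prop)
    (f : Omega -> Rbar) : Prop :=
  exists s : nat -> list (R * (Omega -> Prop)),
    (forall n, is_simple Sg (s n)) /\
    forall w, is_lim_seq (fun n => seval (s n) w) (f w).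

Definition SfE {Omega : Type} (Sg : (Omega -> Prop) -> Prop) (f : Omega -> Rbar)
    (E : Omega -> Prop) (s : list (R * (Omega -> Prop))) : Prop :=
  is_simple Sg s /\ forall w, E w -> Rbar_le (Finite (seval s w)) (f w).

Definition integrable {Omega : Type} (tau : DF -> DF -> DF) (Sg : (Omega -> Prop) -> Prop)
    (g : (Omega -> Prop) -> DF) (f : Omega -> Rbar) (E : Omega -> Prop) : Prop :=
  exists H, Delta H /\ forall s, SfE Sg f E s -> dle H (sint tau g E s).

Definition is_glb (A : DF -> Prop) (H : DF) : Prop :=
  Delta H /\ (forall G, A G -> dle H G) /\
  (forall K, Delta K -> (forall G, A G -> dle K G) -> dle K H).

Definition dinf (A : DF -> Prop) : DF := epsilon (inhabits eps0) (is_glb A).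

Definition integral {Omega : Type} (tau : DF -> DF -> DF) (Sg : (Omega -> Prop) -> Prop)
    (g : (Omega -> Prop) -> DF) (f : Omega -> Rbar) (E : Omega -> Prop) : DF :=
  dinf (fun G => exists s, SfE Sg f E s /\ G = sint tau g E s).

(* Main.v *)
Require Import Defs.
From Coquelicot Require Import Coquelicot.
From Stdlib Require Import Reals Lra List Classical FunctionalExtensionality PropExtensionality ClassicalEpsilon ClassicalDescription Lia ZArith.
Require Import Defs.
Open Scope R_scope.

Ltac pe := let w := fresh "w" in apply functional_extensionality; intro w;
  apply propositional_extensionality.

Lemma D_bnd F : Delta F -> forall x, 0 <= F x <= 1. Proof. intros [H _]; exact H. Qed.
Lemma D_mono F : Delta F -> forall x y, Rbar_le x y -> F x <= F y. Proof. intros [_ [H _]]; exact H. Qed.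
Lemma D_lc F : Delta F -> forall x : R, forall eps, 0 < eps -> exists delta, 0 < delta /\
      forall y : R, x - delta < y < x -> Rabs (F (Finite y) - F (Finite x)) < eps.
Proof. intros [_ [_ [H _]]]; exact H. Qed.
Lemma D_zero F : Delta F -> forall x, Rbar_le x (Finite 0) -> F x = 0.
Proof. intros [_ [_ [_ [H _]]]]; exact H. Qed.
Lemma D_pinf F : Delta F -> F p_infty = 1. Proof. intros [_ [_ [_ [_ H]]]]; exact H. Qed.
Lemma D_minf F : Delta F -> F m_infty = 0. Proof. intro H; apply (D_zero F H); simpl; auto. Qed.

Lemma dle_refl F : dle F F. Proof. intro; lra. Qed.
Lemma dle_trans F G H : dle F G -> dle G H -> dle F H.
Proof. intros a b x; specialize (a x); specialize (b x); lra. Qed.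
Lemma dle_antisym F G : dle F G -> dle G F -> F = G.
Proof. intros a b; apply functional_extensionality; intro x; specialize (a x); specialize (b x); lra. Qed.

Lemma eps0_Delta : Delta eps0.
Proof.
  unfold eps0; split; [|split; [|split; [|split]]].
  - intro x; destruct Rbar_lt_dec; lra.
  - intros x y Hxy; destruct (Rbar_lt_dec 0 x); destruct (Rbar_lt_dec 0 y); try lra.
    exfalso; apply n; eapply Rbar_lt_le_trans; eauto.
  - intros x eps He. destruct (Rlt_dec 0 x).
    + exists x; split; auto. intros y Hy.
      destruct (Rbar_lt_dec 0 y) as [|n]; [|exfalso; apply n; simpl; lra].
      destruct (Rbar_lt_dec 0 x) as [|n]; [|exfalso; apply n; simpl; lra].
      rewrite Rminus_diag, Rabs_R0; auto.
    + exists 1; split; [lra|]. intros y Hy.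
      destruct (Rbar_lt_dec 0 y) as [h|]; [simpl in h; lra|].
      destruct (Rbar_lt_dec 0 x) as [h|]; [simpl in h; lra|].
      rewrite Rminus_diag, Rabs_R0; auto.
  - intros x Hx; destruct (Rbar_lt_dec 0 x) as [h|]; auto.
    exfalso; eapply Rbar_lt_not_le; eauto.
  - destruct (Rbar_lt_dec 0 p_infty) as [|n]; auto. exfalso; apply n; simpl; auto.
Qed.

Lemma eps0_top F : Delta F -> dle F eps0.
Proof.
  intros HF x. unfold eps0; destruct (Rbar_lt_dec 0 x).
  - apply (D_bnd F HF).
  - rewrite (D_zero F HF); [lra|]. now apply Rbar_not_lt_le.
Qed.

Lemma smul_Delta c G : 0 <= c -> Delta G -> Delta (smul c G).
Proof.
  intros Hc HG. unfold smul. destruct (Req_dec_T c 0) as [e|n]; [apply eps0_Delta|].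
  assert (cp : 0 < c) by lra.
  split; [|split; [|split; [|split]]].
  - intro x; destruct x; apply (D_bnd G HG).
  - intros x y Hxy; destruct x as [x| |]; destruct y as [y| |]; simpl in Hxy; try tauto;
      apply (D_mono G HG); simpl; auto.
    unfold Rdiv; apply Rmult_le_compat_r; auto. left; apply Rinv_0_lt_compat; auto.
  - intros x eps He. destruct (D_lc G HG (x / c) eps He) as [d [Hd Hy]].
    exists (d * c); split; [nra|]. intros y Hy'. apply Hy.
    split.
    + assert (E1: x / c - d = (x - d*c) / c) by (field; lra). rewrite E1.
      unfold Rdiv; apply Rmult_lt_compat_r; [apply Rinv_0_lt_compat; auto|lra].
    + unfold Rdiv; apply Rmult_lt_compat_r; [apply Rinv_0_lt_compat; auto|lra].
  - intros x Hx; destruct x as [x| |]; simpl in Hx; try tauto.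
    + apply (D_zero G HG); simpl. unfold Rdiv.
      assert (0 < / c) by (apply Rinv_0_lt_compat; auto). nra.
    + apply (D_minf G HG).
  - apply (D_pinf G HG).
Qed.

Lemma smul_eps0 c : 0 <= c -> smul c eps0 = eps0.
Proof.
  intro Hc. unfold smul. destruct (Req_dec_T c 0); auto.
  apply functional_extensionality; intro x; destruct x as [x| |]; auto.
  unfold eps0. destruct (Rbar_lt_dec 0 (x / c)) as [h|h]; destruct (Rbar_lt_dec 0 x) as [k|k]; auto;
  simpl in *; exfalso.
  - apply k. assert (0 < c) by lra. assert (x / c * c = x) by (field; auto). nra.
  - apply h. unfold Rdiv. apply Rmult_lt_0_compat; auto. apply Rinv_0_lt_compat; lra.
Qed.

Lemma smul_anti x y G : 0 <= x <= y -> Delta G -> dle (smul y G) (smul x G).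
Proof.
  intros Hxy HG. unfold smul.
  destruct (Req_dec_T x 0) as [e|n].
  - intro z. assert (h := eps0_top (smul y G) (smul_Delta y G ltac:(lra) HG) z). exact h.
  - destruct (Req_dec_T y 0) as [e|m]; [lra|]. intro z; destruct z as [z| |]; try lra.
    destruct (Rle_dec z 0).
    + rewrite (D_zero G HG (Finite (z/y))); [apply (D_bnd G HG)|].
      simpl. unfold Rdiv. assert (0 < / y) by (apply Rinv_0_lt_compat; lra). nra.
    + apply (D_mono G HG). simpl. unfold Rdiv. apply Rmult_le_compat_l; [lra|].
      apply Rinv_le_contravar; lra.
Qed.
Section TauSec.
Variable tau : DF -> DF -> DF.
Hypothesis Ht : triangle_function tau.

Lemma tD F G : Delta F -> Delta G -> Delta (tau F G).
Proof. destruct Ht as [H _]; auto. Qed.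
Lemma tC F G : Delta F -> Delta G -> tau F G = tau G F.
Proof. destruct Ht as [_ [H _]]; auto. Qed.
Lemma tA F G H : Delta F -> Delta G -> Delta H -> tau F (tau G H) = tau (tau F G) H.
Proof. destruct Ht as [_ [_ [X _]]]; auto. Qed.
Lemma tMl F G H : Delta F -> Delta G -> Delta H -> dle F G -> dle (tau F H) (tau G H).
Proof. destruct Ht as [_ [_ [_ [X _]]]]; intros; apply X; auto. Qed.
Lemma tMr F G H : Delta F -> Delta G -> Delta H -> dle F G -> dle (tau H F) (tau H G).
Proof. destruct Ht as [_ [_ [_ [X _]]]]; intros; apply X; auto. Qed.
Lemma tE F : Delta F -> tau F eps0 = F.
Proof. destruct Ht as [_ [_ [_ [_ X]]]]; auto. Qed.
Lemma tEl F : Delta F -> tau eps0 F = F.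
Proof. intro; rewrite tC; auto using eps0_Delta, tE. Qed.
Lemma tM2 F F' G G' : Delta F -> Delta F' -> Delta G -> Delta G' -> dle F F' -> dle G G' ->
  dle (tau F G) (tau F' G').
Proof. intros; apply dle_trans with (tau F' G); [apply tMl|apply tMr]; auto. Qed.
Lemma tle F G : Delta F -> Delta G -> dle (tau F G) F.
Proof.
  intros. rewrite <- (tE F) at 2; auto. apply tMr; auto using eps0_Delta, eps0_top.
Qed.
Lemma tswap a b c d : Delta a -> Delta b -> Delta c -> Delta d ->
  tau (tau a b) (tau c d) = tau (tau a c) (tau b d).
Proof.
  intros. rewrite <- !tA by auto using tD. f_equal.
  rewrite !tA by auto using tD. f_equal. apply tC; auto.
Qed.
End TauSec.

Section SgSec.
Variable Omega : Type.
Variable Sg : (Omega -> Prop) -> Prop.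
Hypothesis HS : sigma_ring Sg.

Lemma Sg_empty : Sg (fun _ => False). Proof. apply HS. Qed.
Lemma Sg_diff A B : Sg A -> Sg B -> Sg (fun w => A w /\ ~ B w). Proof. apply HS. Qed.
Lemma Sg_inter A B : Sg A -> Sg B -> Sg (fun w => A w /\ B w).
Proof.
  intros. replace (fun w => A w /\ B w) with (fun w => A w /\ ~ (A w /\ ~ B w)).
  - apply Sg_diff; auto; apply Sg_diff; auto.
  - pe. split; intros [a b]; split; auto; try tauto; apply NNPP; tauto.
Qed.
Lemma Sg_union A B : Sg A -> Sg B -> Sg (fun w => A w \/ B w).
Proof.
  intros. replace (fun w => A w \/ B w) with (fun w => exists n:nat, (match n with O => A | _ => B end) w).
  - apply HS. intros [|n]; auto.
  - pe. split.
    + intros [[|n] h]; auto.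
    + intros [h|h]; [exists O|exists 1%nat]; auto.
Qed.
End SgSec.
Definition okl {Omega} (Sg : (Omega -> Prop) -> Prop) (s : list (R * (Omega -> Prop))) :=
  Forall (fun p => 0 <= fst p /\ Sg (snd p)) s.
Definition dj {Omega} (s : list (R * (Omega -> Prop))) :=
  ForallOrdPairs (fun p q => forall w, ~ (snd p w /\ snd q w)) s.
Definition U {Omega} (s : list (R * (Omega -> Prop))) (w : Omega) := exists p, In p s /\ snd p w.

Lemma okl_cons {Omega} Sg (p : R * (Omega -> Prop)) s : okl Sg (p :: s) <-> (0 <= fst p /\ Sg (snd p)) /\ okl Sg s.
Proof. split; intro H; [inversion H; auto | constructor; tauto]. Qed.
Lemma okl_app {Omega} Sg (s1 s2 : list (R * (Omega -> Prop))) : okl Sg s1 -> okl Sg s2 -> okl Sg (s1 ++ s2).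
Proof. unfold okl; intros; apply Forall_app; auto. Qed.
Lemma okl_map {Omega} Sg Sg' (h : R * (Omega -> Prop) -> R * (Omega -> Prop)) s :
  (forall p, In p s -> 0 <= fst p /\ Sg (snd p) -> 0 <= fst (h p) /\ Sg' (snd (h p))) -> okl Sg s -> okl Sg' (map h s).
Proof.
  unfold okl; intros Hh Hs. apply Forall_map. rewrite Forall_forall in *. intros; apply Hh; auto.
Qed.
Lemma okl_In {Omega} Sg (s : list (R * (Omega -> Prop))) p : okl Sg s -> In p s -> 0 <= fst p /\ Sg (snd p).
Proof. unfold okl; rewrite Forall_forall; auto. Qed.

Lemma FOP_app {A} (Rl : A -> A -> Prop) l1 l2 : ForallOrdPairs Rl l1 -> ForallOrdPairs Rl l2 ->
  (forall a b, In a l1 -> In b l2 -> Rl a b) -> ForallOrdPairs Rl (l1 ++ l2).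
Proof.
  induction l1; simpl; intros H1 H2 H3; auto.
  inversion H1; subst. constructor.
  - apply Forall_app; split; auto. rewrite Forall_forall; intros; apply H3; auto.
  - apply IHl1; auto.
Qed.
Lemma FOP_map {A B} (Rl : A -> A -> Prop) (Rl' : B -> B -> Prop) (h : B -> A) l :
  ForallOrdPairs Rl' l -> (forall a b, In a l -> In b l -> Rl' a b -> Rl (h a) (h b)) ->
  ForallOrdPairs Rl (map h l).
Proof.
  induction l; simpl; intros H1 H2; constructor; inversion H1; subst.
  - apply Forall_map. rewrite Forall_forall in *; intros; apply H2; auto.
  - apply IHl; auto.
Qed.
Lemma dj_cons {Omega} (p : R * (Omega -> Prop)) s : dj (p :: s) ->
  dj s /\ forall q, In q s -> forall w, ~ (snd p w /\ snd q w).
Proof. unfold dj; intro H; inversion H; subst; split; auto. rewrite Forall_forall in *; auto. Qed.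

Lemma U_nil {Omega} : @U Omega nil = fun _ => False.
Proof. pe. unfold U; split; [intros [p [[] _]]|tauto]. Qed.
Lemma U_cons {Omega} (p : R * (Omega -> Prop)) s : U (p :: s) = fun w => snd p w \/ U s w.
Proof.
  pe. unfold U; simpl; split.
  - intros [q [[e|i] h]]; [subst; auto| right; eauto].
  - intros [h|[q [i h]]]; eauto.
Qed.
Lemma Sg_U {Omega} Sg (HS : sigma_ring Sg) (s : list (R * (Omega -> Prop))) : okl Sg s -> Sg (U s).
Proof.
  induction s; intros H; [rewrite U_nil; apply Sg_empty; auto|].
  rewrite U_cons. apply okl_cons in H. apply Sg_union; tauto.
Qed.

Ltac sgt := repeat first [assumption | apply Sg_diff | apply Sg_inter | apply Sg_union | apply Sg_empty | apply Sg_U].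

Section SintSec.
Variable Omega : Type.
Variable tau : DF -> DF -> DF.
Variable Sg : (Omega -> Prop) -> Prop.
Variable g : (Omega -> Prop) -> DF.
Hypothesis Ht : triangle_function tau.
Hypothesis Hdist : distributive tau.
Hypothesis HS : sigma_ring Sg.
Hypothesis Hdec : decomposable tau Sg g.

Lemma gD E : Sg E -> Delta (g E). Proof. destruct Hdec as [H _]; auto. Qed.
Lemma g0 : g (fun _ => False) = eps0. Proof. destruct Hdec as [_ [H _]]; auto. Qed.
Lemma gU E F : Sg E -> Sg F -> (forall w, ~ (E w /\ F w)) -> g (fun w => E w \/ F w) = tau (g E) (g F).
Proof. destruct Hdec as [_ [_ H]]; auto. Qed.

Lemma gI_D E P : Sg E -> Sg P -> Delta (g (fun w => E w /\ P w)).
Proof. intros; apply gD; apply Sg_inter; auto. Qed.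

Lemma smul_D E P c : Sg E -> Sg P -> 0 <= c -> Delta (smul c (g (fun w => E w /\ P w))).
Proof. intros; apply smul_Delta; auto; apply gI_D; auto. Qed.

Lemma sint_D E s : Sg E -> okl Sg s -> Delta (sint tau g E s).
Proof.
  intro HE; induction s; simpl; intro H; [apply eps0_Delta|].
  apply okl_cons in H. destruct H as [[c P] H]. apply tD; auto. apply smul_Delta; auto. apply gI_D; auto.
Qed.

Lemma sint_cons E p s : sint tau g E (p :: s) = tau (smul (fst p) (g (fun w => E w /\ snd p w))) (sint tau g E s).
Proof. reflexivity. Qed.

Lemma sint_app E s1 s2 : Sg E -> okl Sg s1 -> okl Sg s2 ->
  sint tau g E (s1 ++ s2) = tau (sint tau g E s1) (sint tau g E s2).
Proof.
  intros HE; induction s1; simpl; intros H1 H2.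
  - rewrite tEl; auto using sint_D.
  - apply okl_cons in H1. destruct H1 as [[c P] H1]. rewrite IHs1 by auto.
    apply tA; auto using sint_D, smul_D.
Qed.

Lemma sint_ext E E' s : (forall p, In p s -> forall w, (E w /\ snd p w) <-> (E' w /\ snd p w)) ->
  sint tau g E s = sint tau g E' s.
Proof.
  induction s; simpl; intros H; auto.
  rewrite IHs by auto. do 3 f_equal. pe. apply H; auto.
Qed.


Lemma sint_union E F s : Sg E -> Sg F -> (forall w, ~ (E w /\ F w)) -> okl Sg s ->
  sint tau g (fun w => E w \/ F w) s = tau (sint tau g E s) (sint tau g F s).
Proof.
  intros HE HF Hd; induction s; simpl; intro H.
  - rewrite tE; auto using eps0_Delta.
  - apply okl_cons in H. destruct H as [[c P] H]. rewrite IHs by auto.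
    replace (fun w => (E w \/ F w) /\ snd a w) with (fun w => (E w /\ snd a w) \/ (F w /\ snd a w))
      by (pe; tauto).
    rewrite gU by (try apply Sg_inter; auto; intros w [? ?]; apply (Hd w); tauto).
    rewrite Hdist by (auto; apply gI_D; auto).
    apply tswap; auto using smul_D, sint_D.
Qed.

Definition Dm (Q : Omega -> Prop) (s : list (R * (Omega -> Prop))) :=
  map (fun p => (fst p, fun w => snd p w /\ ~ Q w)) s.
Definition Im (Q : Omega -> Prop) (s : list (R * (Omega -> Prop))) :=
  map (fun p => (fst p, fun w => snd p w /\ Q w)) s.

Lemma okl_Dm Q s : Sg Q -> okl Sg s -> okl Sg (Dm Q s).
Proof. intros; apply (okl_map Sg); auto; simpl; intros; split; try tauto; apply Sg_diff; tauto. Qed.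
Lemma okl_Im Q s : Sg Q -> okl Sg s -> okl Sg (Im Q s).
Proof. intros; apply (okl_map Sg); auto; simpl; intros; split; try tauto; apply Sg_inter; tauto. Qed.

Lemma sint_split E Q s : Sg E -> Sg Q -> okl Sg s ->
  sint tau g E s = tau (sint tau g E (Dm Q s)) (sint tau g E (Im Q s)).
Proof.
  intros HE HQ; induction s; simpl; intro H.
  - rewrite tE; auto using eps0_Delta.
  - apply okl_cons in H. destruct H as [[c P] H]. rewrite IHs at 1 by auto.
    replace (fun w => E w /\ snd a w) with
      (fun w => (E w /\ (snd a w /\ ~ Q w)) \/ (E w /\ (snd a w /\ Q w)))
      by (pe; split; [tauto | intros [e p]; destruct (classic (Q w)); tauto]).
    rewrite gU by (first [intro; tauto | sgt]).
    rewrite Hdist by (auto; apply gD; sgt).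
    apply tswap; auto; try apply sint_D; auto using okl_Dm, okl_Im; apply smul_Delta; auto; apply gD; sgt.
Qed.

Lemma sint_coef E (h k : R * (Omega -> Prop) -> R) s : Sg E -> okl Sg s ->
  (forall p, In p s -> 0 <= k p <= h p) ->
  dle (sint tau g E (map (fun p => (h p, snd p)) s)) (sint tau g E (map (fun p => (k p, snd p)) s)).
Proof.
  intros HE; induction s; simpl; intros H Hkh; [apply dle_refl|].
  apply okl_cons in H. destruct H as [[c P] H].
  assert (h1 := Hkh a (or_introl eq_refl)).
  assert (okl Sg (map (fun p => (h p, snd p)) s)) by (apply (okl_map Sg); auto; simpl; intros p Hp ?; split; [specialize (Hkh p (or_intror Hp)); lra| tauto]).
  assert (okl Sg (map (fun p => (k p, snd p)) s)) by (apply (okl_map Sg); auto; simpl; intros p Hp ?; split; [specialize (Hkh p (or_intror Hp)); lra| tauto]).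
  apply tM2; auto using sint_D; try (apply smul_D; auto; lra).
  apply smul_anti; auto. apply gI_D; auto.
Qed.

Lemma map_id' (s : list (R * (Omega -> Prop))) : map (fun p => (fst p, snd p)) s = s.
Proof. induction s as [|[a b] s IH]; simpl; f_equal; auto. Qed.

Lemma sint_const E c s : Sg E -> 0 <= c -> okl Sg s -> dj s ->
  sint tau g E (map (fun p => (c, snd p)) s) = smul c (g (fun w => E w /\ U s w)).
Proof.
  intros HE Hc; induction s; simpl; intros H Hd.
  - rewrite U_nil. replace (fun w : Omega => E w /\ False) with (fun _ : Omega => False) by (pe; tauto).
    rewrite g0, smul_eps0; auto.
  - apply okl_cons in H. destruct H as [[c0 P] H]. apply dj_cons in Hd. destruct Hd as [Hd Hd'].
    rewrite IHs by auto. rewrite <- Hdist by (auto; apply gI_D; auto; apply Sg_U; auto).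
    rewrite <- gU.
    + f_equal. f_equal. rewrite U_cons. pe; tauto.
    + apply Sg_inter; auto.
    + apply Sg_inter; auto; apply Sg_U; auto.
    + intros w [[_ h1] [_ [q [Hq h2]]]]. apply (Hd' q Hq w); auto.
Qed.

Definition merge1 (q : R * (Omega -> Prop)) (s : list (R * (Omega -> Prop))) :=
  Dm (snd q) s ++ map (fun p => (Rmax (fst p) (fst q), snd p)) (Im (snd q) s) ++
  (fst q, fun w => snd q w /\ ~ U s w) :: nil.

Lemma dj_Dm Q s : dj s -> dj (Dm Q s).
Proof. intro H; unfold dj, Dm; eapply FOP_map; eauto. simpl; intros a b _ _ h w [[h1 _] [h2 _]]; apply (h w); auto. Qed.
Lemma dj_Im Q s : dj s -> dj (Im Q s).
Proof. intro H; unfold dj, Im; eapply FOP_map; eauto. simpl; intros a b _ _ h w [[h1 _] [h2 _]]; apply (h w); auto. Qed.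
Lemma dj_coef (h : R * (Omega -> Prop) -> R) s : dj s -> dj (map (fun p => (h p, snd p)) s).
Proof. intro H; unfold dj; eapply FOP_map; eauto. Qed.

Lemma U_Im Q s : U (Im Q s) = fun w => U s w /\ Q w.
Proof.
  pe; unfold U, Im; split.
  - intros [p [Hp h]]. apply in_map_iff in Hp. destruct Hp as [x [<- Hx]]. simpl in h.
    split; [exists x|]; tauto.
  - intros [[p [Hp h]] hq]. exists (fst p, fun w => snd p w /\ Q w). split; [apply in_map_iff; eauto|simpl; auto].
Qed.

Lemma merge_simple q s : 0 <= fst q -> Sg (snd q) -> okl Sg s -> dj s ->
  okl Sg (merge1 q s) /\ dj (merge1 q s).
Proof.
  intros Hq HQ Ho Hd. unfold merge1. split.
  - apply okl_app; [apply okl_Dm; auto|]. apply okl_app.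
    + apply (okl_map Sg); [|apply okl_Im; auto]. simpl; intros p _ [h1 h2]; split; auto.
      apply Rle_trans with (fst p); auto; apply Rmax_l.
    + constructor; [|constructor]. simpl; split; auto. apply Sg_diff; auto. apply Sg_U; auto.
  - apply FOP_app; [apply dj_Dm; auto| |].
    + apply FOP_app; [apply dj_coef, dj_Im; auto| repeat constructor |].
      intros a b Ha [<-|[]]. apply in_map_iff in Ha. destruct Ha as [x [<- Hx]].
      unfold Im in Hx. apply in_map_iff in Hx. destruct Hx as [y [<- Hy]]. simpl.
      intros w [[h1 h2] [h3 h4]]. apply h4. exists y; auto.
    + intros a b Ha Hb. unfold Dm in Ha. apply in_map_iff in Ha. destruct Ha as [x [<- Hx]].
      apply in_app_or in Hb. destruct Hb as [Hb|[<-|[]]].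
      * apply in_map_iff in Hb. destruct Hb as [z [<- Hz]].
        unfold Im in Hz. apply in_map_iff in Hz. destruct Hz as [y [<- Hy]]. simpl. tauto.
      * simpl. tauto.
Qed.

Lemma merge_le1 E q s : Sg E -> 0 <= fst q -> Sg (snd q) -> okl Sg s -> dj s ->
  dle (sint tau g E (merge1 q s)) (sint tau g E s).
Proof.
  intros HE Hq HQ Ho Hd. destruct (merge_simple q s) as [Hm _]; auto.
  assert (oD : okl Sg (Dm (snd q) s)) by (apply okl_Dm; auto).
  assert (oI : okl Sg (Im (snd q) s)) by (apply okl_Im; auto).
  assert (oI' : okl Sg (map (fun p => (Rmax (fst p) (fst q), snd p)) (Im (snd q) s))).
  { apply (okl_map Sg); auto. simpl; intros p _ [h1 h2]; split; auto.
      apply Rle_trans with (fst p); auto; apply Rmax_l. }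
  assert (oL : okl Sg ((fst q, fun w => snd q w /\ ~ U s w) :: nil)).
  { constructor; [|constructor]. simpl; split; auto. apply Sg_diff; auto. apply Sg_U; auto. }
  unfold merge1. rewrite (sint_split E (snd q) s) by auto.
  rewrite !sint_app by auto using okl_app.
  apply tMr; auto using sint_D, okl_app; try apply tD; auto using sint_D.
  apply dle_trans with (sint tau g E (map (fun p => (Rmax (fst p) (fst q), snd p)) (Im (snd q) s))).
  - apply tle; auto using sint_D.
  - rewrite <- (map_id' (Im (snd q) s)) at 2.
    apply sint_coef; auto. intros p Hp; split; [|apply Rmax_l].
    apply (okl_In Sg _ p oI Hp).
Qed.

Lemma merge_le2 E q s : Sg E -> 0 <= fst q -> Sg (snd q) -> okl Sg s -> dj s ->
  dle (sint tau g E (merge1 q s))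
      (tau (smul (fst q) (g (fun w => E w /\ snd q w))) (sint tau g E (Dm (snd q) s))).
Proof.
  intros HE Hq HQ Ho Hd. destruct (merge_simple q s) as [Hm _]; auto.
  assert (oD : okl Sg (Dm (snd q) s)) by (apply okl_Dm; auto).
  assert (oI : okl Sg (Im (snd q) s)) by (apply okl_Im; auto).
  assert (oI' : okl Sg (map (fun p => (Rmax (fst p) (fst q), snd p)) (Im (snd q) s))).
  { apply (okl_map Sg); auto. simpl; intros p _ [h1 h2]; split; auto.
      apply Rle_trans with (fst p); auto; apply Rmax_l. }
  assert (oIy : okl Sg (map (fun p => (fst q, snd p)) (Im (snd q) s))).
  { apply (okl_map Sg); auto. simpl; intros p _ [h1 h2]; split; auto. }
  assert (HU : Sg (U s)) by (apply Sg_U; auto).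
  assert (oL : okl Sg ((fst q, fun w => snd q w /\ ~ U s w) :: nil)).
  { constructor; [|constructor]. simpl; split; auto. apply Sg_diff; auto. }
  unfold merge1. rewrite !sint_app by auto using okl_app.
  rewrite (tC tau Ht (smul (fst q) _)) by (auto using sint_D; apply smul_D; sgt).
  apply tMr; try solve [auto using sint_D, smul_D, okl_app, tD].
  apply dle_trans with (tau (sint tau g E (map (fun p => (fst q, snd p)) (Im (snd q) s)))
                            (sint tau g E ((fst q, fun w => snd q w /\ ~ U s w) :: nil))).
  - apply tMl; try solve [auto using sint_D, smul_D, okl_app, tD].
    apply sint_coef; auto. intros p Hp; split; auto; apply Rmax_r.
  - rewrite sint_const by auto using dj_Im. rewrite U_Im. simpl. rewrite (tE tau Ht) by (apply smul_D; auto; sgt).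
    rewrite <- Hdist by (auto; apply gD; sgt).
    rewrite <- gU by (first [intro; tauto | sgt]).
    replace (fun w => (E w /\ U s w /\ snd q w) \/ (E w /\ snd q w /\ ~ U s w))
      with (fun w => E w /\ snd q w) by (pe; split; [intros [e h]; destruct (classic (U s w)); tauto|tauto]).
    apply dle_refl.
Qed.

Definition mergeall (s1 s2 : list (R * (Omega -> Prop))) := fold_right merge1 s1 s2.
Lemma mergeall_cons s1 q s2 : mergeall s1 (q :: s2) = merge1 q (mergeall s1 s2).
Proof. reflexivity. Qed.
Lemma mergeall_nil s1 : mergeall s1 nil = s1.
Proof. reflexivity. Qed.

Lemma mergeall_simple s1 s2 : okl Sg s1 -> dj s1 -> okl Sg s2 ->
  okl Sg (mergeall s1 s2) /\ dj (mergeall s1 s2).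
Proof.
  intros H1 D1; induction s2; rewrite ?mergeall_cons, ?mergeall_nil; intros H2; auto.
  apply okl_cons in H2. destruct H2 as [[a1 a2] H2]. destruct (IHs2 H2).
  apply merge_simple; auto.
Qed.

Lemma mergeall_le1 E s1 s2 : Sg E -> okl Sg s1 -> dj s1 -> okl Sg s2 ->
  dle (sint tau g E (mergeall s1 s2)) (sint tau g E s1).
Proof.
  intros HE H1 D1; induction s2; rewrite ?mergeall_cons, ?mergeall_nil; intros H2; [apply dle_refl|].
  apply okl_cons in H2. destruct H2 as [[a1 a2] H2]. destruct (mergeall_simple s1 s2) as [o d]; auto.
  eapply dle_trans; [apply merge_le1; auto|]. auto.
Qed.

Lemma sint_Dm E Q s : sint tau g E (Dm Q s) = sint tau g (fun w => E w /\ ~ Q w) s.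
Proof.
  induction s; simpl; auto. rewrite IHs. do 3 f_equal. pe; simpl; tauto.
Qed.

Lemma mergeall_le2 s1 s2 : okl Sg s1 -> dj s1 -> okl Sg s2 -> dj s2 -> forall E, Sg E ->
  dle (sint tau g E (mergeall s1 s2)) (sint tau g E s2).
Proof.
  intros H1 D1; induction s2 as [|q s2 IH]; rewrite ?mergeall_cons, ?mergeall_nil; intros H2 D2 E HE.
  - apply eps0_top. apply sint_D; auto.
  - apply okl_cons in H2. destruct H2 as [[a1 a2] H2]. apply dj_cons in D2. destruct D2 as [D2 D2'].
    destruct (mergeall_simple s1 s2) as [o d]; auto.
    eapply dle_trans; [apply merge_le2; auto|].
    rewrite sint_Dm, sint_cons. apply tMr; [exact Ht|apply sint_D; auto; sgt|apply sint_D; auto|apply smul_D; auto|].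
    + eapply dle_trans; [apply IH; auto; sgt|].
      rewrite (sint_ext E (fun w => E w /\ ~ snd q w) s2); [apply dle_refl|].
      intros p Hp w; split; [|tauto]. intros [h1 h2]; split; auto. split; auto.
      intro h3. apply (D2' p Hp w); auto.
Qed.

Variable f : Omega -> Rbar.
Hypothesis Hf0 : forall w, Rbar_le (Finite 0) (f w).

Definition bnd (E : Omega -> Prop) (t : list (R * (Omega -> Prop))) :=
  forall w p, E w -> In p t -> snd p w -> Rbar_le (Finite (fst p)) (f w).

Lemma seval_zero (s : list (R * (Omega -> Prop))) w : (forall p, In p s -> ~ snd p w) -> seval s w = 0.
Proof.
  induction s; simpl; intros H; auto. rewrite IHs by auto. unfold ind.
  destruct excluded_middle_informative as [h|h]; [exfalso; eapply H; eauto|]. lra.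
Qed.

Lemma seval_in (s : list (R * (Omega -> Prop))) p w : dj s -> In p s -> snd p w -> seval s w = fst p.
Proof.
  induction s; simpl; intros D Hp Hw; [destruct Hp|]. apply dj_cons in D. destruct D as [D D'].
  destruct Hp as [<-|Hp].
  - rewrite seval_zero by (intros q Hq h; apply (D' q Hq w); auto). unfold ind.
    destruct excluded_middle_informative as [h|h]; [lra|tauto].
  - rewrite IHs by auto. unfold ind.
    destruct excluded_middle_informative as [h|h]; [exfalso; apply (D' p Hp w); auto|lra].
Qed.

Lemma SfE_bnd E s : SfE Sg f E s -> bnd E s.
Proof.
  intros [[o d] H] w p Hw Hp Hpw. rewrite <- (seval_in s p w); auto.
Qed.

Lemma bnd_SfE E t : okl Sg t -> dj t -> bnd E t -> SfE Sg f E t.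
Proof.
  intros o d H. split; [split; auto|]. intros w Hw.
  destruct (classic (exists p, In p t /\ snd p w)) as [[p [Hp Hpw]]|n].
  - rewrite (seval_in t p w); auto.
  - rewrite seval_zero; auto. intros p Hp h; apply n; eauto.
Qed.

Lemma Rbar_le_max a b y : Rbar_le (Finite a) y -> Rbar_le (Finite b) y -> Rbar_le (Finite (Rmax a b)) y.
Proof. destruct y; simpl; auto. intros; apply Rmax_lub; auto. Qed.

Lemma merge_bnd E q s : bnd E s -> (forall w, E w -> snd q w -> Rbar_le (Finite (fst q)) (f w)) ->
  bnd E (merge1 q s).
Proof.
  intros H Hq w p Hw Hp Hpw. unfold merge1 in Hp. apply in_app_or in Hp. destruct Hp as [Hp|Hp].
  - unfold Dm in Hp. apply in_map_iff in Hp. destruct Hp as [x [<- Hx]]. simpl in *.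
    apply (H w x); tauto.
  - apply in_app_or in Hp. destruct Hp as [Hp|[<-|[]]].
    + apply in_map_iff in Hp. destruct Hp as [z [<- Hz]].
      unfold Im in Hz. apply in_map_iff in Hz. destruct Hz as [x [<- Hx]]. simpl in *.
      apply Rbar_le_max; [apply (H w x)|apply Hq]; tauto.
    + simpl in *. apply Hq; tauto.
Qed.

Lemma mergeall_bnd E s1 s2 : bnd E s1 -> bnd E s2 -> bnd E (mergeall s1 s2).
Proof.
  intros H1; induction s2; rewrite ?mergeall_cons, ?mergeall_nil; intros H2; auto.
  apply merge_bnd.
  - apply IHs2. intros w p Hw Hp; apply H2; simpl; auto.
  - intros w Hw Hq. apply (H2 w a); simpl; auto.
Qed.

Definition Aset (E : Omega -> Prop) (G : DF) := exists s, SfE Sg f E s /\ G = sint tau g E s.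

Lemma Aset_directed E : Sg E -> forall G1 G2, Aset E G1 -> Aset E G2 ->
  exists G3, Aset E G3 /\ dle G3 G1 /\ dle G3 G2.
Proof.
  intros HE G1 G2 [s1 [S1 ->]] [s2 [S2 ->]].
  pose proof S1 as [[o1 d1] _]. pose proof S2 as [[o2 d2] _].
  destruct (mergeall_simple s1 s2) as [o d]; auto.
  exists (sint tau g E (mergeall s1 s2)). split; [|split].
  - exists (mergeall s1 s2); split; auto. apply bnd_SfE; auto. apply mergeall_bnd; apply SfE_bnd; auto.
  - apply mergeall_le1; auto.
  - apply mergeall_le2; auto.
Qed.

Lemma Aset_D E G : Sg E -> Aset E G -> Delta G.
Proof. intros HE [s [[[o d] _] ->]]. apply sint_D; auto. Qed.

Lemma Aset_nil E : Aset E eps0.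
Proof. exists nil. split; [|reflexivity]. split; [split; constructor|]. intros w _; apply Hf0. Qed.
End SintSec.
Lemma nat_gt r : exists n : nat, r < INR n.
Proof.
  destruct (archimed r) as [h1 h2].
  destruct (Z.lt_ge_cases (up r) 0) as [l|l].
  - exists O. simpl. apply IZR_lt in l. lra.
  - exists (Z.to_nat (up r)). rewrite INR_IZR_INZ, Z2Nat.id; auto; lia.
Qed.

Lemma lub_props (E : R -> Prop) z0 M : E z0 -> (forall z, E z -> z <= M) ->
  (forall z, E z -> z <= real (Lub_Rbar E)) /\
  (forall b, (forall z, E z -> z <= b) -> real (Lub_Rbar E) <= b).
Proof.
  intros H0 HM. destruct (Lub_Rbar_correct E) as [ub lub].
  destruct (Lub_Rbar E) as [r| |] eqn:e.
  - simpl. split; [intros z Hz; apply (ub z Hz)|]. intros b Hb. apply (lub (Finite b)). intros z Hz; apply Hb; auto.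
  - exfalso. assert (h := lub (Finite M)). simpl in h. apply h. intros z Hz; apply HM; auto.
  - exfalso. apply (ub z0 H0).
Qed.

Section GlbSec.
Variable A : DF -> Prop.
Hypothesis Ane : exists A0, A A0.
Hypothesis AD : forall G, A G -> Delta G.

Definition Sx (x : R) (z : R) := exists y : R, y < x /\ forall B, A B -> z <= B (Finite y).
Definition Lf (x : R) := real (Lub_Rbar (Sx x)).
Definition Lg : DF := fun x => match x with Finite r => Lf r | p_infty => 1 | m_infty => 0 end.

Lemma Sx0 x : Sx x 0.
Proof. exists (x - 1); split; [lra|]. intros B HB; apply (D_bnd B (AD B HB)). Qed.
Lemma Sx1 x z : Sx x z -> z <= 1.
Proof. intros [y [_ h]]. destruct Ane as [A0 H0]. specialize (h A0 H0). pose proof (D_bnd A0 (AD A0 H0) y). lra. Qed.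

Lemma L1 x z : Sx x z -> z <= Lf x.
Proof. apply (lub_props (Sx x) 0 1 (Sx0 x) (Sx1 x)). Qed.
Lemma L2 x b : (forall z, Sx x z -> z <= b) -> Lf x <= b.
Proof. apply (lub_props (Sx x) 0 1 (Sx0 x) (Sx1 x)). Qed.

Lemma Lf_mono x x' : x <= x' -> Lf x <= Lf x'.
Proof. intro h. apply L2. intros z [y [hy hz]]. apply L1. exists y; split; auto; lra. Qed.

Lemma Lg_Delta : Delta Lg.
Proof.
  split; [|split; [|split; [|split]]].
  - intros [x| |]; simpl; try lra. split; [apply L1, Sx0|apply L2, Sx1].
  - intros [x| |] [y| |]; simpl; intro h; try tauto; try lra.
    + apply Lf_mono; auto.
    + apply L2, Sx1.
    + apply L1, Sx0.
  - intros x eps He. simpl.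
    assert (ex : exists z, Sx x z /\ Lf x - eps / 2 < z).
    { apply NNPP; intro n. assert (Lf x <= Lf x - eps / 2); [|lra].
      apply L2. intros z Hz. apply Rnot_lt_le. intro h; apply n; eauto. }
    destruct ex as [z [[y0 [hy0 hz]] hlt]].
    exists (x - y0); split; [lra|]. intros y Hy.
    assert (z <= Lf y) by (apply L1; exists y0; split; auto; lra).
    assert (Lf y <= Lf x) by (apply Lf_mono; lra).
    rewrite Rabs_left1; lra.
  - intros [x| |]; simpl; intro h; try tauto; auto.
    apply Rle_antisym; [|apply L1, Sx0]. apply L2. intros z [y [hy hz]].
    destruct Ane as [A0 H0]. rewrite <- (D_zero A0 (AD A0 H0) (Finite y)); auto. simpl; lra.
  - reflexivity.
Qed.

Lemma Lg_glb : is_glb A Lg.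
Proof.
  split; [apply Lg_Delta|split].
  - intros G HG [x| |]; simpl.
    + apply L2. intros z [y [hy hz]]. apply Rle_trans with (G (Finite y)); [apply hz; auto|].
      apply (D_mono G (AD G HG)); simpl; lra.
    + rewrite (D_pinf G (AD G HG)); lra.
    + apply (D_bnd G (AD G HG)).
  - intros K HK HKA [x| |]; simpl.
    + apply Rle_plus_epsilon. intros eps He.
      destruct (D_lc K HK x eps He) as [d [Hd Hy]].
      assert (h := Hy (x - d / 2) ltac:(lra)).
      assert (K (Finite (x - d/2)) <= Lf x).
      { apply L1. exists (x - d/2); split; [lra|]. intros B HB; apply HKA; auto. }
      apply Rabs_def2 in h. lra.
    + apply (D_bnd K HK).
    + rewrite (D_minf K HK); lra.
Qed.
End GlbSec.

Lemma glb_unique A H1 H2 : is_glb A H1 -> is_glb A H2 -> H1 = H2.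
Proof.
  intros [d1 [l1 g1]] [d2 [l2 g2]]. apply dle_antisym; [apply g2|apply g1]; auto.
Qed.

Lemma dinf_glb A : (exists A0, A A0) -> (forall G, A G -> Delta G) -> is_glb A (dinf A).
Proof.
  intros. unfold dinf. apply epsilon_spec. exists (Lg A). apply Lg_glb; auto.
Qed.

Lemma glb_key A H x y z : (exists A0, A A0) -> (forall G, A G -> Delta G) -> is_glb A H ->
  y < x -> (forall B, A B -> z <= B (Finite y)) -> z <= H (Finite x).
Proof.
  intros Ane AD HH hy hz. rewrite (glb_unique A H (Lg A)) by (auto; apply Lg_glb; auto).
  simpl. apply L1; auto. exists y; auto.
Qed.
Section ApproxSec.
Variable A : DF -> Prop.
Hypothesis Ane : exists A0, A A0.
Hypothesis AD : forall G, A G -> Delta G.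
Hypothesis Adir : forall G1 G2, A G1 -> A G2 -> exists G3, A G3 /\ dle G3 G1 /\ dle G3 G2.

Lemma nearmin q t : 0 < t -> exists As, A As /\ forall B, A B -> As (Finite q) <= B (Finite q) + t.
Proof.
  intros Ht. apply NNPP; intro n.
  assert (step : forall G, A G -> exists B, A B /\ B (Finite q) + t < G (Finite q)).
  { intros G HG. apply NNPP; intro m. apply n. exists G; split; auto. intros B HB.
    apply Rnot_lt_le. intro h. apply m. eauto. }
  assert (cl : forall k : nat, exists G, A G /\ G (Finite q) <= 1 - INR k * t).
  { induction k.
    - destruct Ane as [A0 H0]. exists A0; split; auto. simpl. pose proof (D_bnd A0 (AD A0 H0) q). lra.
    - destruct IHk as [G [HG Hk]]. destruct (step G HG) as [B [HB Hb]]. exists B; split; auto.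
      rewrite S_INR. lra. }
  destruct (nat_gt (/ t)) as [k Hk]. destruct (cl k) as [G [HG Hg]].
  pose proof (D_bnd G (AD G HG) q).
  assert (INR k * t > 1).
  { apply Rmult_lt_compat_r with (r := t) in Hk; auto. rewrite Rinv_l in Hk; lra. }
  lra.
Qed.

Lemma nearmin_list (l : list R) t A0 : 0 < t -> A A0 -> exists G, A G /\ dle G A0 /\
  forall q, In q l -> forall B, A B -> G (Finite q) <= B (Finite q) + t.
Proof.
  intros Ht H0. induction l as [|q l IH].
  - exists A0; split; auto; split; [apply dle_refl|]. intros q [].
  - destruct IH as [G1 [HG1 [le1 P1]]]. destruct (nearmin q t Ht) as [As [HAs Ps]].
    destruct (Adir G1 As HG1 HAs) as [G [HG [l1 l2]]].
    exists G; split; [exact HG|]; split; [exact (dle_trans _ _ _ l1 le1)|].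
    intros q' [e|Hq] B HB.
    + subst q'. specialize (l2 (Finite q)). specialize (Ps B HB). lra.
    + specialize (l1 (Finite q')). specialize (P1 q' Hq B HB). lra.
Qed.

Definition grid (n : nat) : list R := map (fun i => INR i / INR (S n)) (seq 0 (S n * S n + 1)).

Definition nxt (n : nat) (G0 : DF) : DF := epsilon (inhabits eps0) (fun G => A G /\ dle G G0 /\
  forall q, In q (grid n) -> forall B, A B -> G (Finite q) <= B (Finite q) + / INR (S n)).

Definition A0 : DF := epsilon (inhabits eps0) A.

Fixpoint seqA (n : nat) : DF := match n with O => nxt O A0 | S m => nxt (S m) (seqA m) end.

Lemma nxt_spec n G0 : A G0 -> A (nxt n G0) /\ dle (nxt n G0) G0 /\
  forall q, In q (grid n) -> forall B, A B -> nxt n G0 (Finite q) <= B (Finite q) + / INR (S n).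
Proof.
  intro H0. unfold nxt. apply epsilon_spec. apply nearmin_list; auto.
  apply Rinv_0_lt_compat. apply lt_0_INR; lia.
Qed.

Lemma A0_in : A A0. Proof. unfold A0. apply epsilon_spec; auto. Qed.

Lemma seqA_spec n : A (seqA n) /\
  (forall q, In q (grid n) -> forall B, A B -> seqA n (Finite q) <= B (Finite q) + / INR (S n)).
Proof.
  induction n; simpl.
  - destruct (nxt_spec O A0 A0_in) as [a [_ c]]; auto.
  - destruct IHn as [h _]. destruct (nxt_spec (S n) (seqA n) h) as [a [_ c]]; auto.
Qed.

Lemma seqA_dec n m : (n <= m)%nat -> dle (seqA m) (seqA n).
Proof.
  induction 1; [apply dle_refl|]. eapply dle_trans; [|eauto]. simpl.
  apply nxt_spec. apply seqA_spec.
Qed.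

Lemma grid_pt x N : 0 < x -> x <= INR N -> exists q, In q (grid N) /\ x < q <= x + / INR (S N).
Proof.
  intros hx hN. set (k := INR (S N)).
  assert (hk : 0 < k) by (apply lt_0_INR; lia).
  destruct (archimed (x * k)) as [h1 h2].
  assert (hup : (0 < up (x * k))%Z) by (apply lt_IZR; simpl; nra).
  exists (INR (Z.to_nat (up (x * k))) / k).
  rewrite INR_IZR_INZ, Z2Nat.id by lia.
  split; [|split].
  - unfold grid. apply in_map_iff. exists (Z.to_nat (up (x * k))).
    split; [rewrite INR_IZR_INZ, Z2Nat.id by lia; reflexivity|].
    apply in_seq. split; [lia|]. rewrite Nat.add_0_l.
    apply INR_lt. rewrite INR_IZR_INZ, Z2Nat.id by lia.
    rewrite plus_INR, mult_INR. fold k.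
    assert (ek : k = INR N + 1) by (unfold k; rewrite S_INR; lra).
    replace (INR 1) with 1 by reflexivity. nra.
  - apply Rmult_lt_reg_r with k; auto. unfold Rdiv. rewrite Rmult_assoc, Rinv_l; lra.
  - apply Rmult_le_reg_r with k; auto. unfold Rdiv. rewrite Rmult_assoc, Rinv_l by lra.
    rewrite Rmult_plus_distr_r, Rinv_l; lra.
Qed.

Lemma seqA_conv H : is_glb A H -> weak_conv seqA H.
Proof.
  intros HH x Hc eps He. pose proof HH as [HD [Hlow _]].
  assert (low : forall n, H (Finite x) <= seqA n (Finite x)) by (intro n; apply Hlow, seqA_spec).
  destruct (Rle_dec x 0) as [hx|hx].
  - exists O. intros n _. unfold Rdist.
    rewrite (D_zero H HD), (D_zero (seqA n) (AD _ (proj1 (seqA_spec n)))) by (simpl; auto).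
    rewrite Rminus_diag, Rabs_R0; auto.
  - unfold continuity_pt, continue_in, limit1_in, limit_in in Hc.
    destruct (Hc (eps / 2)) as [alp [Halp Hal]]; [lra|].
    assert (hq' : Rdist (H (Finite (x + alp / 2))) (H (Finite x)) < eps / 2).
    { apply (Hal (x + alp/2)). split; [split; [exact I|lra]|]. simpl. unfold Rdist.
      rewrite Rabs_right; lra. }
    unfold Rdist in hq'.
    destruct (nat_gt (x + 2 / alp + 2 / eps)) as [N HN].
    assert (2 / alp > 0) by (apply Rdiv_lt_0_compat; lra).
    assert (2 / eps > 0) by (apply Rdiv_lt_0_compat; lra).
    assert (hNS : INR N < INR (S N)) by (rewrite S_INR; lra).
    assert (t1 : / INR (S N) < alp / 2).
    { replace (alp / 2) with (/ (2 / alp)) by (field; lra). apply Rinv_lt_contravar; nra. }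
    assert (t2 : / INR (S N) < eps / 2).
    { replace (eps / 2) with (/ (2 / eps)) by (field; lra). apply Rinv_lt_contravar; nra. }
    destruct (grid_pt x N) as [q [Hq [hq1 hq2]]]; [lra|lra|].
    exists N. intros n Hn. unfold Rdist.
    assert (s1 : seqA n (Finite x) <= seqA N (Finite q)).
    { apply Rle_trans with (seqA N (Finite x)); [apply seqA_dec; auto|].
      apply (D_mono _ (AD _ (proj1 (seqA_spec N)))); simpl; lra. }
    assert (s2 : seqA N (Finite q) - / INR (S N) <= H (Finite (x + alp / 2))).
    { apply (glb_key A H (x + alp / 2) q); [exact Ane|exact AD|exact HH|lra|].
      intros B HB. pose proof (proj2 (seqA_spec N) q Hq B HB). lra. }
    specialize (low n). rewrite Rabs_right by lra.
    apply Rabs_def2 in hq'. lra.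
Qed.

Lemma approx : exists a : nat -> DF, (forall n, A (a n)) /\ forall H, is_glb A H -> weak_conv a H.
Proof. exists seqA. split; [intro; apply seqA_spec|]. apply seqA_conv. Qed.
End ApproxSec.
Section DensSec.
Variable T : R -> R.
Hypothesis Tm : forall x y, x <= y -> T x <= T y.
Hypothesis Tb : forall x, 0 <= T x <= 1.

Definition stepI (p : R * R) : R * R :=
  let c := fst p in let d := snd p in let l := d - c in
  if Rle_dec (T (c + 2*l/5) - T (c + l/5)) (T (c + 4*l/5) - T (c + 3*l/5))
  then (c + l/5, c + 2*l/5) else (c + 3*l/5, c + 4*l/5).

Lemma stepI_spec p : fst p < snd p ->
  fst p < fst (stepI p) /\ fst (stepI p) < snd (stepI p) /\ snd (stepI p) < snd p /\
  T (snd (stepI p)) - T (fst (stepI p)) <= (T (snd p) - T (fst p)) / 2.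
Proof.
  destruct p as [c d]; simpl; intro h. unfold stepI; simpl.
  set (l := d - c).
  assert (el : l = d - c) by reflexivity. clearbody l.
  assert (0 < l) by lra.
  pose proof (Tm c (c + l/5) ltac:(lra)).
  pose proof (Tm (c + 2*l/5) (c + 3*l/5) ltac:(lra)).
  pose proof (Tm (c + 4*l/5) d ltac:(lra)).
  destruct Rle_dec; simpl; repeat split; lra.
Qed.

Variables a b : R.
Fixpoint ivl (n : nat) : R * R := match n with O => (a, b) | S m => stepI (ivl m) end.

Hypothesis hab : a < b.

Lemma ivl_spec n : fst (ivl n) < snd (ivl n) /\ T (snd (ivl n)) - T (fst (ivl n)) <= (1/2)^n.
Proof.
  induction n; simpl.
  - split; auto. pose proof (Tb a); pose proof (Tb b); lra.
  - destruct IHn as [h1 h2]. destruct (stepI_spec (ivl n) h1) as [s1 [s2 [s3 s4]]].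
    split; auto. lra.
Qed.

Lemma ivl_step n : fst (ivl n) < fst (ivl (S n)) /\ snd (ivl (S n)) < snd (ivl n).
Proof.
  simpl. destruct (stepI_spec (ivl n) (proj1 (ivl_spec n))) as [s1 [s2 [s3 s4]]]. auto.
Qed.

Lemma ivl_mono n m : (n <= m)%nat -> fst (ivl n) <= fst (ivl m) /\ snd (ivl m) <= snd (ivl n).
Proof.
  induction 1; [lra|]. destruct (ivl_step m). lra.
Qed.

Lemma ivl_cross n k : fst (ivl n) < snd (ivl k).
Proof.
  destruct (ivl_mono n (max n k) (Nat.le_max_l _ _)).
  destruct (ivl_mono k (max n k) (Nat.le_max_r _ _)).
  pose proof (proj1 (ivl_spec (max n k))). lra.
Qed.

Lemma cont_pt_exists : exists c, a < c < b /\ continuity_pt T c.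
Proof.
  set (E := fun z => exists n, z = fst (ivl n)).
  assert (bE : bound E) by (exists b; intros z [n ->]; left; apply (ivl_cross n O)).
  assert (nE : exists z, E z) by (exists a; exists O; reflexivity).
  destruct (completeness E bE nE) as [x [ub lub]].
  assert (hx : forall n, fst (ivl n) < x < snd (ivl n)).
  { intro n. destruct (ivl_step n). split.
    - apply Rlt_le_trans with (fst (ivl (S n))); auto. apply ub. exists (S n); auto.
    - apply Rle_lt_trans with (snd (ivl (S n))); auto. apply lub. intros z [m ->].
      left; apply ivl_cross. }
  exists x. split; [apply (hx O)|].
  unfold continuity_pt, continue_in, limit1_in, limit_in. intros eps He.
  destruct (pow_lt_1_zero (1/2) ltac:(rewrite Rabs_right; lra) eps He) as [N HN].
  specialize (HN N (le_n N)). rewrite Rabs_right in HN by (apply Rle_ge, pow_le; lra).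
  destruct (hx N) as [h1 h2].
  exists (Rmin (x - fst (ivl N)) (snd (ivl N) - x)). split.
  - apply Rmin_glb_lt; lra.
  - intros y [_ hy]. simpl in hy |- *. unfold Rdist in *.
    assert (m1 := Rmin_l (x - fst (ivl N)) (snd (ivl N) - x)).
    assert (m2 := Rmin_r (x - fst (ivl N)) (snd (ivl N) - x)).
    apply Rabs_def2 in hy.
    pose proof (Tm (fst (ivl N)) y ltac:(lra)).
    pose proof (Tm y (snd (ivl N)) ltac:(lra)).
    pose proof (Tm (fst (ivl N)) x ltac:(lra)).
    pose proof (Tm x (snd (ivl N)) ltac:(lra)).
    pose proof (proj2 (ivl_spec N)).
    apply Rabs_def1; lra.
Qed.
End DensSec.

Lemma le_from_weak H T (u : nat -> DF) : Delta H -> Delta T -> (forall n, dle H (u n)) ->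
  weak_conv u T -> dle H T.
Proof.
  intros HH HT Hu Hw [x| |].
  - apply Rle_plus_epsilon. intros eps He.
    destruct (D_lc H HH x eps He) as [d [Hd Hy]].
    destruct (cont_pt_exists (fun r => T (Finite r))) with (a := x - d) (b := x) as [c [hc Hc]].
    + intros; apply (D_mono T HT); simpl; auto.
    + intros; apply (D_bnd T HT).
    + lra.
    + assert (H (Finite c) <= T (Finite c)).
      { apply Rle_cv_lim with (fun _ => H (Finite c)) (fun n => u n (Finite c)); auto.
        - intro n; apply Hu.
        - intros e he; exists O; intros; unfold Rdist; rewrite Rminus_diag, Rabs_R0; auto. }
      specialize (Hy c hc). apply Rabs_def2 in Hy.
      pose proof (D_mono T HT (Finite c) (Finite x) ltac:(simpl; lra)). lra.
  - rewrite (D_pinf H HH), (D_pinf T HT); lra.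
  - rewrite (D_minf H HH), (D_minf T HT); lra.
Qed.
Lemma sint_Im {Omega} tau g (G Q : Omega -> Prop) s :
  sint tau g G (Im Omega Q s) = sint tau g (fun w => G w /\ Q w) s.
Proof.
  induction s; simpl; auto. rewrite IHs. do 3 f_equal. pe; simpl; tauto.
Qed.

Lemma sint_empty {Omega} tau Sg g : triangle_function tau -> decomposable tau Sg g ->
  forall s : list (R * (Omega -> Prop)), okl Sg s -> sint tau g (fun _ => False) s = eps0.
Proof.
  intros Ht Hdec; induction s; simpl; intro H; auto. apply okl_cons in H. destruct H as [[h1 h2] H].
  rewrite IHs by auto. replace (fun w : Omega => False /\ snd a w) with (fun _ : Omega => False) by (pe; tauto).
  destruct Hdec as [_ [e _]]. rewrite e, smul_eps0 by auto. apply tE; auto using eps0_Delta.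
Qed.

Theorem theorem5p6 (Omega : Type) (tau : DF -> DF -> DF)
    (Sg : (Omega -> Prop) -> Prop) (g : (Omega -> Prop) -> DF) (f : Omega -> Rbar) :
  triangle_function tau -> tau_continuous tau -> distributive tau ->
  inhabited Omega -> sigma_ring Sg ->
  decomposable tau Sg g -> cont_from_below Sg g ->
  (forall w, Rbar_le (Finite 0) (f w)) -> measurable_fun Sg f ->
  (forall E, Sg E -> integrable tau Sg g f E) ->
  decomposable tau Sg (fun E => integral tau Sg g f E).
Proof.
  intros Ht Hc Hdist Hinh HS Hdec Hcfb Hf0 Hmeas Hint.
  assert (Hne : forall E, exists A0, Aset Omega tau Sg g f E A0) by (intro E; exists eps0; exact (Aset_nil Omega tau Sg g f Hf0 E)).
  assert (HAD : forall E, Sg E -> forall G, Aset Omega tau Sg g f E G -> Delta G)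
    by (intros E HE G HG; exact (Aset_D Omega tau Sg g Ht HS Hdec f E G HE HG)).
  assert (Hglb : forall E, Sg E -> is_glb (Aset Omega tau Sg g f E) (integral tau Sg g f E))
    by (intros E HE; exact (dinf_glb _ (Hne E) (HAD E HE))).
  split; [|split].
  - intros E HE. apply Hglb; auto.
  - apply (glb_unique (Aset Omega tau Sg g f (fun _ => False))); [apply Hglb; apply Sg_empty; auto|].
    split; [apply eps0_Delta|split].
    + intros G [s [[[o d] _] ->]]. rewrite (sint_empty tau Sg g Ht Hdec s o). apply dle_refl.
    + intros K HK HKA. apply HKA. exact (Aset_nil Omega tau Sg g f Hf0 _).
  - intros E F HE HF Hd.
    assert (HEF : Sg (fun w => E w \/ F w)) by (apply Sg_union; auto).
    pose proof (Hglb E HE) as GE. pose proof (Hglb F HF) as GF. pose proof (Hglb _ HEF) as GEF.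
    set (A := integral tau Sg g f E) in *. set (B := integral tau Sg g f F) in *.
    set (H := integral tau Sg g f (fun w => E w \/ F w)) in *.
    assert (DA : Delta A) by apply GE. assert (DB : Delta B) by apply GF. assert (DH : Delta H) by apply GEF.
    apply dle_antisym.
    +
      destruct (approx (Aset Omega tau Sg g f E) (Hne E) (HAD E HE)
                 (Aset_directed Omega tau Sg g Ht Hdist HS Hdec f Hf0 E HE)) as [a [Ha Hac]].
      destruct (approx (Aset Omega tau Sg g f F) (Hne F) (HAD F HF)
                 (Aset_directed Omega tau Sg g Ht Hdist HS Hdec f Hf0 F HF)) as [b [Hb Hbc]].
      apply le_from_weak with (u := fun n => tau (a n) (b n)); auto.
      * apply tD; auto.
      * intro n. destruct (Ha n) as [s1 [S1 e1]]. destruct (Hb n) as [s2 [S2 e2]].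
        pose proof S1 as [[o1 d1] _]. pose proof S2 as [[o2 d2] _].
        apply GEF. exists (Im Omega E s1 ++ Im Omega F s2). split.
        -- apply bnd_SfE; auto.
           ++ apply okl_app; apply okl_Im; auto.
           ++ apply FOP_app; try apply dj_Im; auto.
              intros p q Hp Hq. unfold Im in Hp, Hq. apply in_map_iff in Hp, Hq.
              destruct Hp as [x [<- _]]. destruct Hq as [y [<- _]]. simpl.
              intros w [[_ h1] [_ h2]]. apply (Hd w); auto.
           ++ intros w p Hw Hp Hpw. apply in_app_or in Hp. destruct Hp as [Hp|Hp];
                unfold Im in Hp; apply in_map_iff in Hp; destruct Hp as [x [<- Hx]]; simpl in *.
              ** apply (SfE_bnd Omega Sg f E s1 S1 w x); tauto.
              ** apply (SfE_bnd Omega Sg f F s2 S2 w x); tauto.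
        -- rewrite e1, e2. rewrite (sint_app Omega tau Sg g Ht HS Hdec); auto; try (apply okl_Im; auto).
           rewrite !sint_Im. f_equal; apply sint_ext; intros p _ w; simpl; tauto.
      * apply Hc; auto.
        -- intro n; apply (HAD E HE); auto.
        -- intro n; apply (HAD F HF); auto.
    +
      apply GEF; [apply tD; auto|].
      intros G [s [S ->]]. pose proof S as [[o d] Sb].
      rewrite (sint_union Omega tau Sg g Ht Hdist HS Hdec); auto.
      apply tM2; auto; try (eapply sint_D; eauto; fail).
      * apply GE. exists s; split; auto. split; [split; auto|]. intros w Hw; apply Sb; auto.
      * apply GF. exists s; split; auto. split; [split; auto|]. intros w Hw; apply Sb; auto.
Qed.
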